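(* For every feature $f \colon \mathcal{X} \to \mathbb{R}^d$ with $\mathrm{span}\{f\} = \mathcal{G}$, $H(f) = \frac12 \left( \mathbb{E}_{P_{XX'}}[k_{\mathcal{G}}(X, X')] - \mathbb{E}_{P_X P_{X'}}[k_{\mathcal{G}}(X, X')] \right)$, where the joint distribution of $X$ and $X'$ is $P_{XX'}(x, x') = \sum_{y \in \mathcal{Y}} P_Y(y) P_{X|Y=y}(x) P_{X|Y=y}(x')$.
   Context: $X, Y$ are random variables on finite alphabets $\mathcal{X}, \mathcal{Y}$ with joint distribution $P_{X,Y}$ and marginals $P_X, P_Y$. For a $d$-dimensional feature $f$, $\tilde f(x) = f(x) - \mathbb{E}[f(X)]$, $\Lambda_f = \mathbb{E}[f(X) f^T(X)]$, and the H-score is $H(f) = \frac12 \mathbb{E}\left[ \left\| \mathbb{E}[\Lambda_f^{-1/2} \tilde f(X) \mid Y] \right\|^2 \right]$. For a subspace $\mathcal{G}$ of functions $\mathcal{X}\to\mathbb{R}$ with basis $f = (f_1,\dots,f_d)^T$, the projection kernel is $k_{\mathcal{G}}(x, x') = f^T(x) \Lambda_f^{-1} f(x')$. *)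

(* Defs.v *)
From HB Require Import structures.
From mathcomp Require Import all_boot all_order all_algebra.
Set Implicit Arguments. Unset Strict Implicit. Unset Printing Implicit Defensive.
Import Order.TTheory GRing.Theory Num.Theory.
Local Open Scope ring_scope.

Section Defs.
Variables (R : realFieldType) (X Y : finType) (P : X -> Y -> R).

Definition is_joint_pmf : Prop :=
  (forall x y, 0 <= P x y) /\ \sum_x \sum_y P x y = 1.

Definition PX (x : X) : R := \sum_y P x y.
Definition PY (y : Y) : R := \sum_x P x y.

(* conditional P_{X|Y=y}(x) (convention: 0 when P_Y(y) = 0; such y always
   carry weight P_Y(y) = 0 below) *)
Definition PXgivenY (y : Y) (x : X) : R := P x y / PY y.

Definition meanf d (f : X -> 'cV[R]_d) : 'cV[R]_d := \sum_x PX x *: f x.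
Definition centered d (f : X -> 'cV[R]_d) (x : X) : 'cV[R]_d := f x - meanf f.
Definition Lambda d (f : X -> 'cV[R]_d) : 'M[R]_d :=
  \sum_x PX x *: (f x *m (f x)^T).

Definition condE d (v : X -> 'cV[R]_d) (y : Y) : 'cV[R]_d :=
  \sum_x PXgivenY y x *: v x.

Definition sqnorm d (v : 'cV[R]_d) : R := \sum_i (v i 0) ^+ 2.

Definition is_inv_sqrt d (L S : 'M[R]_d) : Prop :=
  S^T = S /\ (forall v : 'cV[R]_d, v != 0 -> 0 < (v^T *m S *m v) 0 0)
  /\ S *m S = invmx L.

(* H-score, with S playing the role of Lambda_f^{-1/2} *)
Definition Hscore d (f : X -> 'cV[R]_d) (S : 'M[R]_d) : R :=
  2^-1 * \sum_y PY y * sqnorm (condE (fun x => S *m centered f x) y).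

(* projection kernel of span{g}, computed from the basis g *)
Definition projkernel e (g : X -> 'cV[R]_e) (x x' : X) : R :=
  ((g x)^T *m invmx (Lambda g) *m g x') 0 0.

Definition PXX' (x x' : X) : R :=
  \sum_y PY y * PXgivenY y x * PXgivenY y x'.

Definition same_span d e (f : X -> 'cV[R]_d) (g : X -> 'cV[R]_e) : Prop :=
  (exists A : 'M[R]_(d, e), forall x, f x = A *m g x) /\
  (exists B : 'M[R]_(e, d), forall x, g x = B *m f x).

End Defs.

(* Main.v *)
Require Import Defs.
From HB Require Import structures.
From mathcomp Require Import all_boot all_order all_algebra.
Import Order.TTheory GRing.Theory Num.Theory.
Set Implicit Arguments.
Local Open Scope ring_scope.

Section H.
Variables (R : realFieldType) (n : nat) (K : 'M[R]_n).
Definition bf (u v : 'cV[R]_n) : R := (u^T *m K *m v) 0 0.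

Lemma bf_suml (I : finType) (a : I -> R) (u : I -> 'cV[R]_n) v :
  bf (\sum_i a i *: u i) v = \sum_i a i * bf (u i) v.
Proof.
rewrite /bf raddf_sum /= !mulmx_suml summxE; apply: eq_bigr => i _.
by rewrite linearZ /= -!scalemxAl mxE.
Qed.

Lemma bf_sumr (I : finType) (a : I -> R) (u : I -> 'cV[R]_n) v :
  bf v (\sum_i a i *: u i) = \sum_i a i * bf v (u i).
Proof.
rewrite /bf !mulmx_sumr summxE; apply: eq_bigr => i _.
by rewrite -!scalemxAr mxE.
Qed.

Lemma bf_subl u u' v : bf (u - u') v = bf u v - bf u' v.
Proof. by rewrite /bf linearB /= !mulmxBl mxE mxE mxE. Qed.

Lemma bf_subr u u' v : bf v (u - u') = bf v u - bf v u'.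
Proof. by rewrite /bf !mulmxBr mxE mxE mxE. Qed.
End H.
Arguments bf {R n}.

Lemma inv_unique (R : realFieldType) n (L M : 'M[R]_n) :
  L \in unitmx -> L *m M = 1%:M -> M = invmx L.
Proof.
move=> uL h; by rewrite -[M]mul1mx -(mulVmx uL) -mulmxA h mulmx1.
Qed.

Lemma cancel_lambda (R : realFieldType) (X Y : finType) (P : X -> Y -> R) n m
  (g : X -> 'cV[R]_n) (A : 'M[R]_(m, n)) (B : 'M[R]_(n, m)) :
  Lambda P g \in unitmx -> (forall x, g x = B *m (A *m g x)) -> B *m A = 1%:M.
Proof.
move=> uL h.
have e : (B *m A) *m Lambda P g = Lambda P g.
  rewrite /Lambda mulmx_sumr; apply: eq_bigr => x _.
  by rewrite -scalemxAr !mulmxA -(mulmxA B) -h.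
by rewrite -[B *m A]mulmx1 -(mulmxV uL) mulmxA e mulmxV.
Qed.

Lemma sqnormE (R : realFieldType) n (v : 'cV[R]_n) : sqnorm v = (v^T *m v) 0 0.
Proof. by rewrite /sqnorm mxE; apply: eq_bigr => i _; rewrite !mxE expr2. Qed.

Lemma marg (R : realFieldType) (X Y : finType) (P : X -> Y -> R) x :
  is_joint_pmf P -> \sum_x' PXX' P x x' = PX P x.
Proof.
move=> [P0 _]; rewrite /PXX' exchange_big /PX; apply: eq_bigr => y _.
rewrite -mulr_sumr.
have [PY0|PYn0] := eqVneq (PY P y) 0.
  have : P x y = 0.
    move: PY0; rewrite /PY => /eqP; rewrite psumr_eq0 => [/allP H|i _ //].
    by apply/eqP; apply: H; rewrite mem_index_enum.
  by move=> ->; rewrite PY0 !mul0r.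
rewrite /PXgivenY -mulr_suml -/(PY P y) divff // mulr1 mulrC divfK //.
Qed.

Theorem proposition2 (R : realFieldType) (X Y : finType) (P : X -> Y -> R)
  (e : nat) (g : X -> 'cV[R]_e) (d : nat) (f : X -> 'cV[R]_d) (S : 'M[R]_d) :
  is_joint_pmf P ->
  Lambda P g \in unitmx ->
  Lambda P f \in unitmx ->
  same_span f g ->
  is_inv_sqrt (Lambda P f) S ->
  Hscore P f S =
    2^-1 * (\sum_x \sum_x' PXX' P x x' * projkernel P g x x'
            - \sum_x \sum_x' PX P x * PX P x' * projkernel P g x x').
Proof.
move=> pmf ug uf [[A hA] [B hB]] [ST [_ SS]].
set K : 'M[R]_e := invmx (Lambda P g).
have BA : B *m A = 1%:M.
  apply: (@cancel_lambda _ _ _ P _ _ g A B ug) => x; by rewrite -hA hB.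
have AB : A *m B = 1%:M.
  apply: (@cancel_lambda _ _ _ P _ _ f B A uf) => x; by rewrite -hB hA.
have LfB : Lambda P f *m B^T = A *m Lambda P g.
  rewrite /Lambda mulmx_suml mulmx_sumr; apply: eq_bigr => x _.
  by rewrite -scalemxAl -scalemxAr -mulmxA -trmx_mul -hB hA mulmxA.
have NE : invmx (Lambda P f) = B^T *m K *m B.
  symmetry; apply: inv_unique => //.
  by rewrite !mulmxA LfB -(mulmxA A) mulmxV // mulmx1 AB.
have ANA : A^T *m invmx (Lambda P f) *m A = K.
  by rewrite NE !mulmxA -trmx_mul BA trmx1 mul1mx -mulmxA BA mulmx1.
have mE : meanf P f = A *m meanf P g.
  rewrite /meanf mulmx_sumr; apply: eq_bigr => x _; by rewrite -scalemxAr hA.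
have cE : forall y, condE P (fun x => S *m centered P f x) y
                    = S *m (A *m condE P (centered P g) y).
  move=> y; rewrite /condE mulmxA !mulmx_sumr; apply: eq_bigr => x _.
  by rewrite -!scalemxAr /centered mE hA -mulmxBr mulmxA.
set m := meanf P g.
have kE : forall x x', projkernel P g x x' = bf K (g x) (g x') by [].
have sumPX : \sum_x PX P x = 1 by case: pmf.
have bm : forall v, \sum_x PX P x * bf K (g x) v = bf K m v.
  by move=> v; rewrite /m /meanf bf_suml.
have bm' : forall v, \sum_x PX P x * bf K v (g x) = bf K v m.
  by move=> v; rewrite /m /meanf bf_sumr.
have sym : forall x x', PXX' P x x' = PXX' P x' x.
  by move=> x x'; rewrite /PXX'; apply: eq_bigr => y _; rewrite mulrAC.
rewrite /Hscore; congr (_ * _).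
have -> : \sum_y PY P y * sqnorm (condE P (fun x => S *m centered P f x) y)
   = \sum_y PY P y * bf K (condE P (centered P g) y) (condE P (centered P g) y).
  apply: eq_bigr => y _; rewrite cE sqnormE /bf -ANA; congr (_ * _).
  rewrite !trmx_mul !mulmxA -(mulmxA _ S^T) ST SS; congr (fun M => M 0 0).
set c := centered P g.
have L2 : \sum_y PY P y * bf K (condE P c y) (condE P c y)
    = \sum_x \sum_x' PXX' P x x' * bf K (c x) (c x').
  under eq_bigr => y _ do rewrite /condE bf_suml mulr_sumr.
  rewrite exchange_big; apply: eq_bigr => x _.
  under eq_bigr => y _ do rewrite bf_sumr !mulr_sumr.
  rewrite exchange_big; apply: eq_bigr => x' _.
  rewrite /PXX' mulr_suml; apply: eq_bigr => y _; by rewrite !mulrA.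
rewrite L2.
have cc : forall x x', bf K (c x) (c x') =
   (bf K (g x) (g x') - bf K (g x) m) - (bf K m (g x') - bf K m m).
  by move=> x x'; rewrite /c /centered -/m (bf_subl K) !(bf_subr K).
under eq_bigr => x _ do (under eq_bigr => x' _ do rewrite cc !mulrBr; rewrite !sumrB).
rewrite !sumrB.
have E2 : \sum_x \sum_x' PXX' P x x' * bf K m (g x') = bf K m m.
  rewrite exchange_big /=.
  under eq_bigr => x' _ do rewrite -mulr_suml.
  under eq_bigr => x' _ do (under eq_bigr => x _ do rewrite sym; rewrite marg //).
  by rewrite bm'.
have E3 : \sum_x \sum_x' PXX' P x x' * bf K (g x) m = bf K m m.
  under eq_bigr => x _ do rewrite -mulr_suml marg //.
  by rewrite bm.
have E4 : \sum_x \sum_x' PXX' P x x' * bf K m m = bf K m m.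
  under eq_bigr => x _ do rewrite -mulr_suml marg //.
  by rewrite -mulr_suml sumPX mul1r.
have E5 : \sum_x \sum_x' PX P x * PX P x' * projkernel P g x x' = bf K m m.
  under eq_bigr => x _ do (under eq_bigr => x' _ do rewrite kE -mulrA; rewrite -mulr_sumr bm').
  by rewrite bm.
rewrite E2 E3 E4 E5 subrr subr0.
by [].
Qed.
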